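(* In the setting below, assume $Z$ is monotone on $[0,x_+]$, the initial data is the step $p_0(\xi)=1$ for $\xi\le0$ and $p_0(\xi)=0$ for $\xi>0$, and $e^{-\pi}<Z_+/Z_-<e^{\pi}$. Then $$\sum_{m=0}^\infty T_{2m}^\infty=\frac{2Z_+}{Z_-+Z_+}=C_G\,\operatorname{sech}(\log C_G),\qquad \sum_{m=0}^\infty R_{2m+1}^\infty=\frac{Z_+-Z_-}{Z_-+Z_+}=\tanh(\log C_G),$$ where $T_{2m}^\infty=\lim_{t\to\infty}T_{2m}(t)$ and $R_{2m+1}^\infty=\lim_{t\to\infty}R_{2m+1}(t)$. Both series converge.
   Context: Setting. Fix $x_+>0$. Let $K,\rho:\mathbb R\to(0,\infty)$ be continuous. On $(-\infty,0)$ they are constant, $(K,\rho)=(K_-,\rho_-)$; on $(x_+,\infty)$ they are constant, $(K,\rho)=(K_+,\rho_+)$; and on $[0,x_+]$ they are continuously differentiable. Define $Z=\sqrt{K\rho}$ and $c=\sqrt{K/\rho}$, with constant values $Z_\pm$, $c_\pm$ outside $[0,x_+]$. Let $r(x)=Z'(x)/(2Z(x))$ on $[0,x_+]$, $\tau(x)=\int_0^x ds/c(s)$, $t_+=\tau(x_+)$, and $C_G=\sqrt{Z_+/Z_-}$. A sequence $\mathbf x=(x_1,\dots,x_n)$ is alternating if $x_1\ge x_2\le x_3\ge\cdots$, that is, $x_j\le x_{j-1}$ for even $j\ge2$ and $x_j\ge x_{j-1}$ for odd $j\ge3$. Let $\mathcal P_n^{[0,x_+]}$ be the set of alternating $\mathbf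 x\in[0,x_+]^n$, and put $\hat t(\mathbf x)=2\sum_{j=1}^n(-1)^{j+1}\tau(x_j)$. Define $$\xi_R(\mathbf x,x,t)=-c_-(t-\hat t(\mathbf x)+\tau(x)),\qquad \xi_T(\mathbf x,x,t)=-c_-(t-\hat t(\mathbf x)-\tau(x)).$$ For $m\ge0$ define $$R_{2m+1}(t)=(-1)^m\int_{\mathcal P_{2m+1}^{[0,x_+]}}p_0(\xi_R(\mathbf x,0,t))\prod_{j=1}^{2m+1}r(x_j)\,d\mathbf x,$$ $$T_{2m}(t)=(-1)^mC_G\int_{\mathcal P_{2m}^{[0,x_+]}}p_0(\xi_T(\mathbf x,x_+,t))\prod_{j=1}^{2m}r(x_j)\,d\mathbf x,$$ with $T_0(t)=C_G\,p_0(-c_-(t-t_+))$. *)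

(* Defs.v *)
From Stdlib Require Import Reals Lra List ClassicalEpsilon.
Import ListNotations.
Open Scope R_scope.

(* Total Riemann integral: the Stdlib Riemann integral when f is Riemann
   integrable between a and b (oriented), and 0 otherwise. *)
Definition RInt (f : R -> R) (a b : R) : R :=
  match excluded_middle_informative (inhabited (Riemann_integrable f a b)) with
  | left H => RiemannInt (epsilon H (fun _ => True))
  | right _ => 0
  end.

Definition cont_within (g : R -> R) (a b x : R) : Prop :=
  limit1_in g (fun y => a <= y <= b) (g x) x.

(* f is continuously differentiable on [a,b] with derivative df:
   f' = df on (a,b) and df extends continuously to [a,b]
   (equivalently, one-sided derivatives at the endpoints, since f is
   continuous on [a,b]). *)
Definition C1_on (f df : R -> R) (a b : R) : Prop :=
  (forall x, a <= x <= b -> cont_within f a b x) /\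
  (forall x, a <= x <= b -> cont_within df a b x) /\
  (forall x, a < x < b -> derivable_pt_lim f x (df x)).

Definition monotone_on (f : R -> R) (a b : R) : Prop :=
  (forall x y, a <= x -> x <= y -> y <= b -> f x <= f y) \/
  (forall x y, a <= x -> x <= y -> y <= b -> f y <= f x).

Definition Zf (K rho : R -> R) (x : R) : R := sqrt (K x * rho x).
Definition cf (K rho : R -> R) (x : R) : R := sqrt (K x / rho x).

Definition tauf (c : R -> R) (x : R) : R := RInt (fun s => / c s) 0 x.

Definition p0_step (xi : R) : R := if Rle_dec xi 0 then 1 else 0.

(* Integral over the alternating set P_n^{[0,xp]}:
   x_1 in [0,xp], x_j in [0,x_{j-1}] for even j, x_j in [x_{j-1},xp] for
   odd j >= 3; written as an iterated integral.  [acc] holds the already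
   chosen variables in reverse order, [j] is the index of the next one. *)
Fixpoint altI (k j : nat) (xp prev : R) (acc : list R) (F : list R -> R) : R :=
  match k with
  | O => F (rev acc)
  | S k' =>
      let g := fun x => altI k' (S j) xp x (x :: acc) F in
      if Nat.eqb j 1 then RInt g 0 xp
      else if Nat.even j then RInt g 0 prev
      else RInt g prev xp
  end.

Definition alt_integral (n : nat) (xp : R) (F : list R -> R) : R :=
  altI n 1 xp 0 [] F.

Fixpoint alt_sum (l : list R) : R :=
  match l with [] => 0 | a :: l' => a - alt_sum l' end.

Definition hat_t (tau : R -> R) (xs : list R) : R := 2 * alt_sum (map tau xs).

Definition prod_r (r : R -> R) (xs : list R) : R :=
  fold_right (fun x acc => r x * acc) 1 xs.

Definition R_odd (p0 : R -> R) (cm xp : R) (tau r : R -> R) (m : nat) (t : R) : R :=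
  (-1) ^ m * alt_integral (2 * m + 1) xp
    (fun xs => p0 (- cm * (t - hat_t tau xs + tau 0)) * prod_r r xs).

(* T_{2m}(t); for m = 0 this is C_G p0(-c_-(t - t_+)). *)
Definition T_even (p0 : R -> R) (CG cm xp : R) (tau r : R -> R) (m : nat) (t : R) : R :=
  (-1) ^ m * CG * alt_integral (2 * m) xp
    (fun xs => p0 (- cm * (t - hat_t tau xs - tau xp)) * prod_r r xs).

Definition lim_infty (f : R -> R) (l : R) : Prop :=
  forall eps, eps > 0 -> exists M, forall t, t > M -> Rabs (f t - l) < eps.

(* Main.v *)
Require Import Defs.
From Stdlib Require Import Reals List Lra Lia Classical ClassicalEpsilon FunctionalExtensionality.
From Coquelicot Require Import Coquelicot.
Open Scope R_scope.

Lemma DRInt_eq f a b : ex_RInt f a b -> Defs.RInt f a b = RInt f a b.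
Proof.
  intros H. unfold Defs.RInt.
  destruct (excluded_middle_informative _) as [H1|H1].
  - rewrite (RInt_Reals f a b (ex_RInt_Reals_0 _ _ _ H)). apply RiemannInt_P5.
  - exfalso; apply H1; constructor; now apply ex_RInt_Reals_0.
Qed.

Lemma DRInt_ext f g a b : (forall x, Rmin a b <= x <= Rmax a b -> f x = g x) ->
  Defs.RInt f a b = Defs.RInt g a b.
Proof.
  intros H. destruct (classic (ex_RInt f a b)) as [Hf|Hf].
  - assert (Hg : ex_RInt g a b) by (eapply ex_RInt_ext; [|exact Hf]; intros; apply H; lra).
    rewrite !DRInt_eq; auto. apply RInt_ext; intros; apply H; lra.
  - unfold Defs.RInt. destruct excluded_middle_informative as [Hp|Hp].
    { exfalso; destruct Hp as [p]; apply Hf; now apply ex_RInt_Reals_1. }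
    destruct excluded_middle_informative as [Hq|Hq]; auto.
    exfalso; destruct Hq as [q]. apply Hf. apply ex_RInt_Reals_1 in q. eapply ex_RInt_ext;[|exact q].
    intros; symmetry; apply H; lra.
Qed.

Lemma FTC_open (F f : R -> R) a b : a <= b -> (forall x, continuous f x) ->
  (forall x, a <= x <= b -> continuity_pt F x) ->
  (forall x, a < x < b -> is_derive F x (f x)) -> RInt f a b = F b - F a.
Proof.
  intros hab hf hF hd.
  assert (hex : forall u v, ex_RInt f u v) by (intros; apply (ex_RInt_continuous (V:=R_CompleteNormedModule)); auto).
  assert (hI : forall x, is_derive (fun y => RInt f a y) x (f x)).
  { intros x. apply is_derive_RInt with a. apply filter_forall. intros y.
    apply RInt_correct, hex. apply hf. }
  destruct (MVT_gen (fun x => RInt f a x - F x) a b (fun _ => 0)) as [c [_ hc]].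
  - intros x hx. rewrite Rmin_left, Rmax_right in hx by lra.
    replace 0 with (f x - f x) by ring. apply (is_derive_minus (fun y => RInt f a y) F); auto.
  - intros x hx. rewrite Rmin_left, Rmax_right in hx by lra.
    apply continuity_pt_minus; [|apply hF; lra].
    apply continuity_pt_filterlim, (ex_derive_continuous (V:=R_NormedModule) (fun y => RInt f a y)). eexists; apply hI.
  - rewrite RInt_point in hc. unfold zero in hc; simpl in hc. lra.
Qed.

Definition clamp (xp x : R) := Rmax 0 (Rmin xp x).

Lemma clamp_in xp x : 0 <= xp -> 0 <= clamp xp x <= xp.
Proof. intros; unfold clamp, Rmax, Rmin; repeat destruct Rle_dec; lra. Qed.

Lemma clamp_id xp x : 0 <= x <= xp -> clamp xp x = x.
Proof. intros; unfold clamp, Rmax, Rmin; repeat destruct Rle_dec; lra. Qed.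

Lemma clamp_lip xp x y : 0 <= xp -> Rabs (clamp xp y - clamp xp x) <= Rabs (y - x).
Proof. intros; unfold clamp, Rmax, Rmin; repeat destruct Rle_dec; split_Rabs; lra. Qed.

Lemma clamp_cont (dZ : R -> R) xp : 0 < xp -> (forall x, 0 <= x <= xp -> cont_within dZ 0 xp x) ->
  forall x, continuity_pt (fun y => dZ (clamp xp y)) x.
Proof.
  intros hxp H x eps he.
  destruct (H (clamp xp x) (clamp_in xp x ltac:(lra)) eps he) as [alp [ha hh]].
  exists alp; split; auto. intros y [_ hy]. apply hh. split.
  - apply clamp_in; lra.
  - simpl in *. unfold R_dist in *. eapply Rle_lt_trans; [apply clamp_lip; lra| exact hy].
Qed.

Lemma RInt_deriv0 (g : R -> R) : (forall x, continuous g x) ->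
  forall x, is_derive (fun s => RInt g 0 s) x (g x).
Proof.
  intros hg x. apply is_derive_RInt with 0. apply filter_forall. intros y.
  apply RInt_correct, (ex_RInt_continuous (V:=R_CompleteNormedModule)); auto. apply hg.
Qed.

Lemma RInt_cont0 (g : R -> R) : (forall x, continuous g x) ->
  forall x, continuous (fun s => RInt g 0 s) x.
Proof.
  intros hg x. apply (ex_derive_continuous (V:=R_NormedModule)). eexists; apply RInt_deriv0; auto.
Qed.

Lemma RInt_split0 (g : R -> R) a b : (forall x, continuous g x) ->
  RInt g a b = RInt g 0 b - RInt g 0 a.
Proof.
  intros hg. assert (hex : forall u v, ex_RInt g u v)
    by (intros; apply (ex_RInt_continuous (V:=R_CompleteNormedModule)); auto).
  rewrite <- (RInt_Chasles g 0 a b) by auto. unfold plus; simpl. unfold Rminus. rewrite Rplus_comm, <- Rplus_assoc, Rplus_opp_l, Rplus_0_l. reflexivity.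
Qed.

Lemma CoV (Z dZ Q : R -> R) xp a b :
  0 < xp -> (forall x, 0 < Z x) -> continuity Z ->
  (forall x, 0 <= x <= xp -> cont_within dZ 0 xp x) ->
  (forall x, 0 < x < xp -> derivable_pt_lim Z x (dZ x)) ->
  (forall x, continuous Q x) -> 0 <= a <= b -> b <= xp ->
  let v := fun x => ln (Z x) / 2 - ln (Z 0) / 2 in
  ex_RInt (fun x => dZ x / (2 * Z x) * Q (v x)) a b /\
  RInt (fun x => dZ x / (2 * Z x) * Q (v x)) a b = RInt Q (v a) (v b).
Proof.
  intros hxp hZ hZc hdc hd hQ hab hb v.
  set (fe := fun x => dZ (clamp xp x) / (2 * Z x) * Q (v x)).
  assert (hvc : forall x, continuity_pt v x).
  { intros x. unfold v. apply continuity_pt_minus; [|apply continuity_pt_const; intros ? ?; auto].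
    apply continuity_pt_div; [|apply continuity_pt_const; intros ? ?; auto|lra].
    apply (continuity_pt_comp Z ln). apply hZc.
    apply derivable_continuous_pt. eexists. apply derivable_pt_lim_ln. auto. }
  assert (hfe : forall x, continuous fe x).
  { intros x. apply continuity_pt_filterlim. unfold fe. apply continuity_pt_mult.
    - apply continuity_pt_div. apply clamp_cont; auto.
      apply continuity_pt_mult. apply continuity_pt_const; intros ? ?; auto. apply hZc.
      specialize (hZ x); lra.
    - apply (continuity_pt_comp v Q). auto. apply continuity_pt_filterlim, hQ. }
  assert (hexfe : ex_RInt fe a b) by (apply (ex_RInt_continuous (V:=R_CompleteNormedModule)); auto).
  assert (heq : forall x, Rmin a b < x < Rmax a b -> fe x = dZ x / (2 * Z x) * Q (v x)).
  { intros x hx. rewrite Rmin_left, Rmax_right in hx by lra. unfold fe. rewrite clamp_id by lra. auto. }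
  split. { eapply ex_RInt_ext; [exact heq|exact hexfe]. }
  rewrite <- (RInt_ext fe) by exact heq.
  rewrite (FTC_open (fun x => RInt Q 0 (v x)) fe a b); try lra; auto.
  - rewrite (RInt_split0 Q (v a) (v b)) by auto. auto.
  - intros x hx. apply (continuity_pt_comp v (fun s => RInt Q 0 s)); auto.
    apply continuity_pt_filterlim, RInt_cont0; auto.
  - intros x hx. unfold fe. rewrite clamp_id by lra.
    replace (dZ x / (2 * Z x) * Q (v x)) with (scal (dZ x / (2 * Z x)) (Q (v x))) by reflexivity.
    apply (is_derive_comp (fun s => RInt Q 0 s) v). apply RInt_deriv0; auto.
    unfold v. specialize (hZ x). assert (hdx := hd x ltac:(lra)). apply is_derive_Reals in hdx.
    auto_derive. split; [eexists; exact hdx | lra].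
    replace (Derive (fun x0 : R => Z x0) x) with (dZ x) by (symmetry; apply is_derive_unique; exact hdx). field. lra.
Qed.

Fixpoint P (L : R) (n : nat) (e : bool) (s : R) : R :=
  match n with
  | O => 1
  | S n' => if e then RInt (P L n' false) 0 s else RInt (P L n' true) s L
  end.

Lemma P_cont L n : forall e x, continuous (P L n e) x.
Proof.
  induction n as [|n IH]; intros e x; simpl.
  - apply continuous_const.
  - destruct e.
    + apply RInt_cont0; auto.
    + apply (continuous_ext (fun s => RInt (P L n true) 0 L - RInt (P L n true) 0 s)).
      { intros; symmetry; apply RInt_split0; auto. }
      apply (continuous_minus (V:=R_NormedModule)). apply continuous_const. apply RInt_cont0; auto.
Qed.

Lemma prod_r_app r l1 l2 : prod_r r (l1 ++ l2) = prod_r r l1 * prod_r r l2.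
Proof. induction l1; simpl; [ring| rewrite IHl1; ring]. Qed.

Lemma prod_r_rev r l : prod_r r (rev l) = prod_r r l.
Proof. induction l; simpl; auto. rewrite prod_r_app, IHl; simpl; ring. Qed.

Lemma DRInt_CoV (Z dZ Q : R -> R) xp a b c :
  0 < xp -> (forall x, 0 < Z x) -> continuity Z ->
  (forall x, 0 <= x <= xp -> cont_within dZ 0 xp x) ->
  (forall x, 0 < x < xp -> derivable_pt_lim Z x (dZ x)) ->
  (forall x, continuous Q x) -> 0 <= a <= b -> b <= xp ->
  let v := fun x => ln (Z x) / 2 - ln (Z 0) / 2 in
  Defs.RInt (fun x => c * (dZ x / (2 * Z x) * Q (v x))) a b = c * RInt Q (v a) (v b).
Proof.
  intros hxp hZ hZc hdc hd hQ hab hb v.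
  destruct (CoV Z dZ Q xp a b hxp hZ hZc hdc hd hQ hab hb) as [h1 h2].
  rewrite DRInt_eq.
  - assert (H3 := RInt_scal (V:=R_CompleteNormedModule) (fun x => dZ x / (2 * Z x) * Q (v x)) a b c h1).
    unfold scal in H3; simpl in H3; unfold mult in H3; simpl in H3. rewrite H3.
    unfold v in *. rewrite h2. reflexivity.
  - apply (ex_RInt_scal (V:=R_NormedModule) _ a b c h1).
Qed.

Lemma altI_P (Z dZ : R -> R) xp :
  0 < xp -> (forall x, 0 < Z x) -> continuity Z ->
  (forall x, 0 <= x <= xp -> cont_within dZ 0 xp x) ->
  (forall x, 0 < x < xp -> derivable_pt_lim Z x (dZ x)) ->
  let r := fun x => dZ x / (2 * Z x) in
  let v := fun x => ln (Z x) / 2 - ln (Z 0) / 2 in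
  forall k j prev acc, (1 <= j)%nat -> (j = 1%nat -> prev = 0) -> 0 <= prev <= xp ->
  altI k j xp prev acc (prod_r r) = prod_r r acc * P (v xp) k (Nat.even j) (v prev).
Proof.
  intros hxp hZ hZc hdc hd r v k.
  induction k as [|k IH]; intros j prev acc hj h1 hprev.
  - simpl. rewrite prod_r_rev. ring.
  - simpl altI.
    assert (hg : forall x, 0 <= x <= xp ->
      altI k (S j) xp x (x :: acc) (prod_r r) =
      prod_r r acc * (r x * P (v xp) k (negb (Nat.even j)) (v x))).
    { intros x hx. rewrite IH by (lia || lra). rewrite Nat.even_succ, Nat.negb_even. simpl. ring. }
    assert (hv0 : v 0 = 0) by (unfold v; ring).
    destruct (Nat.eqb_spec j 1) as [e1|e1].
    + subst j. rewrite (h1 eq_refl) in *.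
      rewrite (DRInt_ext _ (fun x => prod_r r acc * (r x * P (v xp) k (negb (Nat.even 1)) (v x)))).
      2:{ intros x hx. rewrite Rmin_left, Rmax_right in hx by lra. apply hg; lra. }
      unfold r. rewrite (DRInt_CoV Z dZ _ xp) by (auto using P_cont || lra). simpl. reflexivity.
    + destruct (Nat.even j) eqn:ej.
      * rewrite (DRInt_ext _ (fun x => prod_r r acc * (r x * P (v xp) k (negb true) (v x)))).
        2:{ intros x hx. rewrite Rmin_left, Rmax_right in hx by lra. apply hg; lra. }
        unfold r. rewrite (DRInt_CoV Z dZ _ xp) by (auto using P_cont || lra). unfold v in *. rewrite hv0. simpl. reflexivity.
      * rewrite (DRInt_ext _ (fun x => prod_r r acc * (r x * P (v xp) k (negb false) (v x)))).
        2:{ intros x hx. rewrite Rmin_left, Rmax_right in hx by lra. apply hg; lra. }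
        unfold r. rewrite (DRInt_CoV Z dZ _ xp) by (auto using P_cont || lra). simpl. reflexivity.
Qed.

Definition Cf (f : R -> R) := forall x, continuous f x.
Definition Ta L (f : R -> R) := fun s => RInt f s L.
Definition Tb (f : R -> R) := fun s => RInt f 0 s.
Definition Wo L f := Ta L (Tb f).
Definition Wt L f := Tb (Ta L f).

Lemma exR f a b : Cf f -> ex_RInt f a b.
Proof. intros h. apply (ex_RInt_continuous (V:=R_CompleteNormedModule)); intros; apply h. Qed.

Lemma Tb_cont f : Cf f -> Cf (Tb f).
Proof. intros h x. apply RInt_cont0; auto. Qed.

Lemma Ta_cont L f : Cf f -> Cf (Ta L f).
Proof.
  intros h x. apply (continuous_ext (fun s => RInt f 0 L - RInt f 0 s)).
  { intros; symmetry; apply RInt_split0; auto. }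
  apply (continuous_minus (V:=R_NormedModule)). apply continuous_const. apply RInt_cont0; auto.
Qed.

Lemma Wo_cont L f : Cf f -> Cf (Wo L f).
Proof. intros; apply Ta_cont, Tb_cont; auto. Qed.
Lemma Wt_cont L f : Cf f -> Cf (Wt L f).
Proof. intros; apply Tb_cont, Ta_cont; auto. Qed.

Lemma RInt_minus' f g a b : Cf f -> Cf g ->
  RInt (fun x => f x - g x) a b = RInt f a b - RInt g a b.
Proof. intros hf hg. apply (RInt_minus (V:=R_CompleteNormedModule)); apply exR; auto. Qed.

Lemma Ta_lin L f g : Cf f -> Cf g -> Ta L (fun x => f x - g x) = fun s => Ta L f s - Ta L g s.
Proof. intros; apply functional_extensionality; intros; unfold Ta; apply RInt_minus'; auto. Qed.
Lemma Tb_lin f g : Cf f -> Cf g -> Tb (fun x => f x - g x) = fun s => Tb f s - Tb g s.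
Proof. intros; apply functional_extensionality; intros; unfold Tb; apply RInt_minus'; auto. Qed.

Lemma Wo_lin L f g : Cf f -> Cf g -> Wo L (fun x => f x - g x) = fun s => Wo L f s - Wo L g s.
Proof. intros. unfold Wo. rewrite Tb_lin, Ta_lin; auto using Tb_cont. Qed.
Lemma Wt_lin L f g : Cf f -> Cf g -> Wt L (fun x => f x - g x) = fun s => Wt L f s - Wt L g s.
Proof. intros. unfold Wt. rewrite Ta_lin, Tb_lin; auto using Ta_cont. Qed.

Lemma neumann (Wop : (R -> R) -> (R -> R)) (one A : R -> R) :
  Cf one -> Cf A -> (forall f, Cf f -> Cf (Wop f)) ->
  (forall f g, Cf f -> Cf g -> Wop (fun x => f x - g x) = fun s => Wop f s - Wop g s) ->
  A = (fun s => one s - Wop A s) ->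
  forall M s, A s = sum_f_R0 (fun m => (-1) ^ m * Nat.iter m Wop one s) M
                     + (-1) ^ (S M) * Nat.iter (S M) Wop A s.
Proof.
  intros h1 hA hW hl hfix.
  assert (hc : forall n f, Cf f -> Cf (Nat.iter n Wop f)).
  { induction n; intros; simpl; auto. }
  assert (hil : forall n f g, Cf f -> Cf g ->
     Nat.iter n Wop (fun x => f x - g x) = fun s => Nat.iter n Wop f s - Nat.iter n Wop g s).
  { induction n; intros f g hf hg; simpl; auto. rewrite IHn by auto. apply hl; auto. }
  induction M; intros s.
  - simpl. pose proof (f_equal (fun h => h s) hfix) as e; simpl in e.
    transitivity (one s - Wop A s); [exact e| ring].
  - rewrite IHM. simpl sum_f_R0.
    assert (e : Nat.iter (S M) Wop A s = Nat.iter (S M) Wop one s - Nat.iter (S (S M)) Wop A s).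
    { replace (Nat.iter (S M) Wop A s) with (Nat.iter (S M) Wop (fun x => one x - Wop A x) s)
        by (rewrite <- hfix; reflexivity).
      rewrite hil; auto. rewrite (Nat.iter_succ_r (S M)). reflexivity. }
    rewrite e. simpl pow. change (Nat.iter (S M) Wop one s) with (Wop (Nat.iter M Wop one) s). ring.
Qed.

Lemma RInt_by_deriv (F f : R -> R) a b : (forall x, is_derive F x (f x)) ->
  (forall x, ex_derive f x) -> RInt f a b = F b - F a.
Proof.
  intros hF hf. apply is_RInt_unique. apply (is_RInt_derive F f a b).
  - intros; apply hF.
  - intros; apply (ex_derive_continuous (V:=R_NormedModule)); apply hf.
Qed.

Lemma cosh_pos x : 0 < cosh x.
Proof. unfold cosh. pose proof (exp_pos x); pose proof (exp_pos (-x)); lra. Qed.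

Definition Ae L s := cosh s / cosh L.
Definition Be L s := cosh (L - s) / cosh L.

Lemma Ae_cont L : Cf (Ae L).
Proof.
  intros x. apply (ex_derive_continuous (V:=R_NormedModule)). unfold Ae, cosh.
  pose proof (cosh_pos L); unfold cosh in H. auto_derive. lra.
Qed.
Lemma Be_cont L : Cf (Be L).
Proof.
  intros x. apply (ex_derive_continuous (V:=R_NormedModule)). unfold Be, cosh.
  pose proof (cosh_pos L); unfold cosh in H. auto_derive. lra.
Qed.
Lemma one_cont : Cf (fun _ => 1).
Proof. intros x; apply continuous_const. Qed.

Lemma Ae_fix L : Ae L = (fun s => 1 - Wo L (Ae L) s).
Proof.
  apply functional_extensionality; intros s. unfold Wo, Ta, Tb.
  pose proof (cosh_pos L) as hc. unfold cosh in hc.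
  rewrite (RInt_ext (fun y => RInt (Ae L) 0 y) (fun y => sinh y / cosh L - sinh 0 / cosh L)).
  2:{ intros; unfold Ae. apply (RInt_by_deriv (fun y => sinh y / cosh L)); intros; unfold sinh, cosh; auto_derive; try lra; unfold Rminus; field; lra. }
  rewrite (RInt_by_deriv (fun y => cosh y / cosh L - y * (sinh 0 / cosh L))).
  - unfold Ae. assert (h0 : sinh 0 = 0) by (unfold sinh; rewrite Ropp_0; field). rewrite h0. field. unfold cosh; lra.
  - intros; unfold sinh, cosh; auto_derive; try lra; unfold Rminus; field; lra.
  - intros; unfold sinh, cosh; auto_derive; lra.
Qed.

Lemma Be_fix L : Be L = (fun s => 1 - Wt L (Be L) s).
Proof.
  apply functional_extensionality; intros s. unfold Wt, Ta, Tb.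
  pose proof (cosh_pos L) as hc. unfold cosh in hc.
  rewrite (RInt_ext (fun y => RInt (Be L) y L) (fun y => sinh (L - y) / cosh L)).
  2:{ intros; unfold Be. rewrite (RInt_by_deriv (fun z => - sinh (L - z) / cosh L)).
      - unfold sinh. replace (L - L) with 0 by ring. rewrite Ropp_0. match goal with |- ?a = ?b => change (@eq R a b) end. field. unfold cosh; lra.
      - intros; unfold sinh, cosh; auto_derive; try lra; unfold Rminus; field; lra.
      - intros; unfold sinh, cosh; auto_derive; lra. }
  rewrite (RInt_by_deriv (fun y => - cosh (L - y) / cosh L)).
  - unfold Be. replace (L - 0) with L by ring. field. unfold cosh; lra.
  - intros; unfold sinh, cosh; auto_derive; try lra; unfold Rminus; field; lra.
  - intros; unfold sinh, cosh; auto_derive; lra.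
Qed.

Lemma TaBe0 L : Ta L (Be L) 0 = tanh L.
Proof.
  unfold Ta, Be, tanh. pose proof (cosh_pos L) as hc. unfold cosh in hc.
  rewrite (RInt_by_deriv (fun z => - sinh (L - z) / cosh L)).
  - unfold sinh. replace (L - L) with 0 by ring. replace (L - 0) with L by ring. rewrite Ropp_0. match goal with |- ?a = ?b => change (@eq R a b) end. field. unfold cosh; lra.
  - intros; unfold sinh, cosh; auto_derive; try lra; unfold Rminus; field; lra.
  - intros; unfold sinh, cosh; auto_derive; lra.
Qed.

Lemma P_even L m : P L (2 * m) false = Nat.iter m (Wo L) (fun _ => 1)
  /\ P L (2 * m) true = Nat.iter m (Wt L) (fun _ => 1).
Proof.
  induction m as [|m [IH1 IH2]].
  - simpl. split; apply functional_extensionality; reflexivity.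
  - replace (2 * S m)%nat with (S (S (2 * m))) by lia. simpl Nat.iter.
    rewrite <- IH1, <- IH2. split; apply functional_extensionality; reflexivity.
Qed.

Lemma exp_le' a b : a <= b -> exp a <= exp b.
Proof. intros [h|h]; [left; apply exp_increasing; auto| subst; lra]. Qed.

Lemma cos_mono a b : 0 <= a <= b -> b <= PI -> cos b <= cos a.
Proof. intros h hb. destruct (Req_dec a b); [subst; lra|]. left. apply cos_decreasing_1; lra. Qed.


Lemma bounds_setup L : 0 <= L -> L < PI / 2 ->
  let w := PI / (PI / 2 + L) in
  1 < w /\ w * L < PI / 2 /\ 0 <= w * L /\ 0 < cos (w * L).
Proof.
  intros h0 h1 w. pose proof PI_RGT_0.
  assert (hd : 0 < PI / 2 + L) by lra.
  assert (h2 : 1 < w) by (unfold w; apply Rlt_div_r; lra).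
  assert (h3 : w * L < PI / 2).
  { unfold w. unfold Rdiv. rewrite Rmult_assoc, (Rmult_comm (/ _)), <- Rmult_assoc.
    apply Rlt_div_l; [lra|]. nra. }
  repeat split; auto; try nra. apply cos_gt_0; nra.
Qed.

Lemma Bb L w d (f : R -> R) c : 0 < w -> 0 <= d -> Cf f -> 0 <= c -> 0 <= L ->
  (forall y, 0 <= y <= L -> Rabs (f y) <= c * cos (w * y)) ->
  forall s, 0 <= s <= L -> Rabs (Tb f s) <= c / w * (sin (w * s) + d).
Proof.
  intros hw hd hf hc hL hb s hs. unfold Tb.
  assert (hcf : Cf (fun t => c * cos (w * t))).
  { intros x; apply (ex_derive_continuous (V:=R_NormedModule)); auto_derive; auto. }
  assert (haf : Cf (fun t => Rabs (f t))) by (intros x; apply continuous_Rabs_comp, hf).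
  eapply Rle_trans. apply abs_RInt_le; [lra| apply exR; auto].
  eapply Rle_trans. apply RInt_le; [lra|apply exR; auto|apply exR; exact hcf|].
  { intros x hx. apply hb; lra. }
  rewrite (RInt_by_deriv (fun t => c * sin (w * t) / w)).
  - rewrite Rmult_0_r, sin_0. assert (0 <= c / w * d) by (apply Rmult_le_pos; auto; apply Rdiv_le_0_compat; lra).
    unfold Rdiv in *. lra.
  - intros x; auto_derive; auto. field; lra.
  - intros x; auto_derive; auto.
Qed.

Lemma Ba L w d (g : R -> R) c : 0 < w -> 0 <= d -> Cf g -> 0 <= c -> 0 <= L ->
  d * L <= cos (w * L) / w ->
  (forall y, 0 <= y <= L -> Rabs (g y) <= c * (sin (w * y) + d)) ->
  forall s, 0 <= s <= L -> Rabs (Ta L g s) <= c / w * cos (w * s).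
Proof.
  intros hw hd hg hc hL hdL hb s hs. unfold Ta.
  assert (hcf : Cf (fun t => c * (sin (w * t) + d))).
  { intros x; apply (ex_derive_continuous (V:=R_NormedModule)); auto_derive; auto. }
  assert (haf : Cf (fun t => Rabs (g t))) by (intros x; apply continuous_Rabs_comp, hg).
  eapply Rle_trans. apply abs_RInt_le; [lra| apply exR; auto].
  eapply Rle_trans. apply RInt_le; [lra|apply exR; auto|apply exR; exact hcf|].
  { intros x hx. apply hb; lra. }
  rewrite (RInt_by_deriv (fun t => c * (- cos (w * t) / w + d * t))).
  - assert (h1 : d * (L - s) <= cos (w * L) / w) by nra.
    assert (h2 : c * (d * (L - s)) <= c * (cos (w * L) / w)) by (apply Rmult_le_compat_l; auto).
    unfold Rdiv in *. nra.
  - intros x; auto_derive; auto. field; lra.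
  - intros x; auto_derive; auto.
Qed.

Lemma iterWo_bound L w d f c : 0 < w -> 0 <= d -> 0 <= L -> d * L <= cos (w * L) / w ->
  Cf f -> 0 <= c -> (forall y, 0 <= y <= L -> Rabs (f y) <= c * cos (w * y)) ->
  forall M, Cf (Nat.iter M (Wo L) f) /\
    forall s, 0 <= s <= L -> Rabs (Nat.iter M (Wo L) f s) <= c * (/ (w * w)) ^ M * cos (w * s).
Proof.
  intros hw hd hL hdL hf hc hb M. induction M as [|M [IH1 IH2]].
  - simpl. split; auto. intros s hs. rewrite Rmult_1_r. auto.
  - assert (hq : 0 <= (/ (w * w)) ^ M) by (apply pow_le; left; apply Rinv_0_lt_compat; nra).
    split. { simpl. apply Wo_cont; auto. }
    intros s hs. simpl Nat.iter. unfold Wo.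
    assert (hB := Bb L w d _ (c * (/ (w * w)) ^ M) hw hd IH1 ltac:(nra) hL IH2).
    assert (hA := Ba L w d (Tb (Nat.iter M (Wo L) f)) (c * (/ (w * w)) ^ M / w) hw hd
                   (Tb_cont _ IH1) ltac:(apply Rdiv_le_0_compat; nra) hL hdL hB s hs).
    eapply Rle_trans; [exact hA|]. right. simpl pow. field. lra.
Qed.

Lemma conv_helper (u : nat -> R) l (err : nat -> R) c q : 0 <= c -> 0 <= q < 1 ->
  (forall M, l = sum_f_R0 u M + err M) -> (forall M, Rabs (err M) <= c * q ^ (S M)) ->
  infinite_sum u l.
Proof.
  intros hc hq he hb eps heps.
  destruct (pow_lt_1_zero q ltac:(rewrite Rabs_pos_eq; lra) (eps / (c + 1))
     ltac:(apply Rdiv_lt_0_compat; lra)) as [N hN].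
  exists N. intros n hn. unfold R_dist. rewrite (he n).
  replace (sum_f_R0 u n - (sum_f_R0 u n + err n)) with (- err n) by ring. rewrite Rabs_Ropp.
  eapply Rle_lt_trans; [apply hb|].
  assert (h1 := hN (S n) ltac:(lia)). rewrite Rabs_pos_eq in h1 by (apply pow_le; lra).
  assert (h2 : c * q ^ S n <= c * (eps / (c + 1))) by (apply Rmult_le_compat_l; lra).
  assert (h3 : c * (eps / (c + 1)) < eps).
  { replace (c * (eps / (c + 1))) with (eps - eps / (c + 1)) by (field; lra).
    assert (0 < eps / (c + 1)) by (apply Rdiv_lt_0_compat; lra). lra. }
  lra.
Qed.

Lemma P_odd L m : P L (2 * m + 1) false = Nat.iter m (Wo L) (Ta L (fun _ => 1)).
Proof.
  induction m as [|m IH].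
  - simpl. apply functional_extensionality; reflexivity.
  - replace (2 * S m + 1)%nat with (S (S (2 * m + 1))) by lia. simpl Nat.iter.
    rewrite <- IH. apply functional_extensionality; reflexivity.
Qed.

Lemma cosh_ratio t L : 0 <= t <= L -> Rabs (cosh t / cosh L) <= 2.
Proof.
  intros ht. pose proof (cosh_pos t); pose proof (cosh_pos L).
  rewrite Rabs_pos_eq by (apply Rdiv_le_0_compat; lra).
  apply Rle_div_l; auto. unfold cosh.
  assert (exp t <= exp L) by (apply exp_le'; lra).
  assert (exp (- t) <= exp 0) by (apply exp_le'; lra). rewrite exp_0 in H2.
  assert (exp 0 <= exp L) by (apply exp_le'; lra). rewrite exp_0 in H3.
  pose proof (exp_pos (- L)). lra.
Qed.

Lemma Ao_fix L : Ta L (Be L) = (fun s => Ta L (fun _ => 1) s - Wo L (Ta L (Be L)) s).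
Proof.
  rewrite (Be_fix L) at 1. rewrite Ta_lin; [|apply one_cont| apply Wt_cont, Be_cont].
  reflexivity.
Qed.

Lemma series_pos L : 0 <= L -> L < PI / 2 ->
  infinite_sum (fun m => (-1) ^ m * P L (2 * m) false 0) (/ cosh L) /\
  infinite_sum (fun m => (-1) ^ m * P L (2 * m + 1) false 0) (tanh L).
Proof.
  intros h0 h1. destruct (bounds_setup L h0 h1) as [hw [hwL [hwL0 hcos]]].
  set (w := PI / (PI / 2 + L)) in *.
  set (d := cos (w * L) / (w * L + 1)).
  assert (hd : 0 < d) by (unfold d; apply Rdiv_lt_0_compat; lra).
  assert (hdL : d * L <= cos (w * L) / w).
  { assert (e : cos (w * L) / w - d * L = cos (w * L) / (w * (w * L + 1))) by (unfold d; field; lra).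
    assert (0 < cos (w * L) / (w * (w * L + 1))) by (apply Rdiv_lt_0_compat; nra). lra. }
  assert (hcosy : forall y, 0 <= y <= L -> cos (w * L) <= cos (w * y)).
  { intros y hy. apply cos_mono; [split; nra|]. pose proof PI_RGT_0; lra. }
  set (q := / (w * w)).
  assert (hq : 0 <= q < 1).
  { unfold q. split. left; apply Rinv_0_lt_compat; nra.
    rewrite <- Rinv_1. apply Rinv_lt_contravar; nra. }
  split.
  -
    set (cA := 2 / cos (w * L)).
    assert (hbA : forall y, 0 <= y <= L -> Rabs (Ae L y) <= cA * cos (w * y)).
    { intros y hy. unfold Ae. eapply Rle_trans; [apply cosh_ratio; lra|].
      unfold cA. specialize (hcosy y hy).
      replace (2 / cos (w * L) * cos (w * y)) with (2 + 2 * (cos (w * y) - cos (w * L)) / cos (w * L))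
        by (field; lra).
      assert (0 <= 2 * (cos (w * y) - cos (w * L)) / cos (w * L)) by (apply Rdiv_le_0_compat; lra).
      lra. }
    assert (hcA : 0 <= cA) by (unfold cA; apply Rdiv_le_0_compat; lra).
    apply (conv_helper _ _ (fun M => (-1) ^ S M * Nat.iter (S M) (Wo L) (Ae L) 0) cA q hcA hq).
    + intros M. assert (hn := neumann (Wo L) (fun _ => 1) (Ae L) one_cont (Ae_cont L)
         (Wo_cont L) (Wo_lin L) (Ae_fix L) M 0).
      replace (/ cosh L) with (Ae L 0) by (unfold Ae; unfold cosh; rewrite Ropp_0, exp_0; field;
         pose proof (cosh_pos L) as hh; unfold cosh in hh; lra).
      rewrite hn. f_equal. apply sum_eq. intros i _. rewrite (proj1 (P_even L i)). reflexivity.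
    + intros M. destruct (iterWo_bound L w d (Ae L) cA ltac:(lra) ltac:(lra) h0 hdL (Ae_cont L) hcA hbA (S M)) as [_ hb].
      rewrite Rabs_mult, pow_1_abs, Rmult_1_l. eapply Rle_trans; [apply hb; lra|].
      rewrite Rmult_0_r, cos_0, Rmult_1_r. right; reflexivity.
  -
    set (cO := 2 / d / w).
    assert (hbB : forall y, 0 <= y <= L -> Rabs (Be L y) <= 2 / d * (sin (w * y) + d)).
    { intros y hy. unfold Be. eapply Rle_trans; [apply cosh_ratio; lra|].
      assert (0 <= sin (w * y)) by (apply sin_ge_0; pose proof PI_RGT_0; nra).
      replace (2 / d * (sin (w * y) + d)) with (2 / d * sin (w * y) + 2) by (field; lra).
      assert (0 <= 2 / d * sin (w * y)) by (apply Rmult_le_pos; auto; apply Rdiv_le_0_compat; lra).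
      lra. }
    assert (hbO := Ba L w d (Be L) (2 / d) ltac:(lra) ltac:(lra) (Be_cont L)
                     ltac:(apply Rdiv_le_0_compat; lra) h0 hdL hbB).
    assert (hcO : 0 <= cO) by (unfold cO; apply Rdiv_le_0_compat; [apply Rdiv_le_0_compat|]; lra).
    apply (conv_helper _ _ (fun M => (-1) ^ S M * Nat.iter (S M) (Wo L) (Ta L (Be L)) 0) cO q hcO hq).
    + intros M. assert (hn := neumann (Wo L) (Ta L (fun _ => 1)) (Ta L (Be L))
         (Ta_cont L _ one_cont) (Ta_cont L _ (Be_cont L))
         (Wo_cont L) (Wo_lin L) (Ao_fix L) M 0).
      rewrite <- TaBe0. rewrite hn. f_equal. apply sum_eq. intros i _. rewrite P_odd. reflexivity.
    + intros M. destruct (iterWo_bound L w d (Ta L (Be L)) cO ltac:(lra) ltac:(lra) h0 hdL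
           (Ta_cont L _ (Be_cont L)) hcO hbO (S M)) as [_ hb].
      rewrite Rabs_mult, pow_1_abs, Rmult_1_l. eapply Rle_trans; [apply hb; lra|].
      rewrite Rmult_0_r, cos_0, Rmult_1_r. right; reflexivity.
Qed.

Lemma RInt_refl (f g : R -> R) k a b : Cf f -> Cf g -> (forall y, f (- y) = k * g y) ->
  RInt f (- a) (- b) = - k * RInt g a b.
Proof.
  intros hf hg he.
  assert (H := RInt_comp_lin (V:=R_CompleteNormedModule) f (-1) 0 a b (exR _ _ _ hf)).
  replace (-1 * a + 0) with (- a) in H by ring. replace (-1 * b + 0) with (- b) in H by ring.
  rewrite <- H.
  rewrite (RInt_ext _ (fun y => scal (- k) (g y))).
  2:{ intros x _. unfold scal; simpl; unfold mult; simpl. replace (-1 * x + 0) with (- x) by ring.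
      rewrite he. ring. }
  rewrite (RInt_scal (V:=R_CompleteNormedModule)) by (apply exR; auto).
  reflexivity.
Qed.

Lemma P_refl L n : forall e s, P (- L) n e (- s) = (-1) ^ n * P L n e s.
Proof.
  induction n as [|n IH]; intros e s.
  - simpl. ring.
  - destruct e; simpl P.
    + replace (RInt (P (-L) n false) 0 (-s)) with (RInt (P (-L) n false) (-0) (-s))
        by (rewrite Ropp_0; reflexivity). rewrite (RInt_refl _ (P L n false) ((-1) ^ n)); try (intros ?; apply P_cont); auto.
      simpl. ring.
    + rewrite (RInt_refl _ (P L n true) ((-1) ^ n)); try (intros ?; apply P_cont); auto. simpl. ring.
Qed.

Lemma series_all L : Rabs L < PI / 2 ->
  infinite_sum (fun m => (-1) ^ m * P L (2 * m) false 0) (/ cosh L) /\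
  infinite_sum (fun m => (-1) ^ m * P L (2 * m + 1) false 0) (tanh L).
Proof.
  intros hL. destruct (Rle_dec 0 L) as [h|h].
  - apply series_pos; auto. rewrite Rabs_pos_eq in hL; auto.
  - assert (hn : forall n, P L n false 0 = (-1) ^ n * P (- L) n false 0).
    { intros n. rewrite <- P_refl. rewrite Ropp_involutive, Ropp_0. reflexivity. }
    rewrite Rabs_left in hL by lra.
    destruct (series_pos (- L) ltac:(lra) ltac:(lra)) as [h1 h2].
    assert (ec : cosh (- L) = cosh L) by (unfold cosh; rewrite Ropp_involutive; field).
    assert (et : tanh (- L) = - tanh L).
    { unfold tanh, sinh. rewrite ec, Ropp_involutive. unfold Rdiv. ring. }
    split.
    + rewrite <- ec. intros eps he. destruct (h1 eps he) as [N hN]. exists N. intros n hn'.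
      rewrite (sum_eq _ (fun m => (-1) ^ m * P (- L) (2 * m) false 0)); auto.
      intros i _. rewrite hn, pow_1_even. ring.
    + intros eps he. destruct (h2 eps he) as [N hN]. exists N. intros n hn'.
      rewrite (sum_eq _ (fun m => ((-1) ^ m * P (- L) (2 * m + 1) false 0) * -1)).
      2:{ intros i _. rewrite hn, Nat.add_1_r, pow_1_odd. ring. }
      rewrite <- scal_sum. specialize (hN n hn'). rewrite et in hN. unfold R_dist in *.
      replace (-1 * sum_f_R0 (fun m : nat => (-1) ^ m * P (- L) (2 * m + 1) false 0) n - tanh L)
        with (- (sum_f_R0 (fun m : nat => (-1) ^ m * P (- L) (2 * m + 1) false 0) n - - tanh L)) by ring.
      rewrite Rabs_Ropp. exact hN.
Qed.

Lemma cont_side (f : R -> R) a c d : continuity_pt f a -> (d = 1 \/ d = -1) ->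
  (forall x, 0 < d * (x - a) -> f x = c) -> f a = c.
Proof.
  intros hc hd h. apply NNPP; intros hne.
  assert (he : Rabs (f a - c) > 0) by (apply Rabs_pos_lt; lra).
  destruct (hc _ he) as [alp [ha hh]].
  assert (hx := hh (a + d * (alp / 2))). simpl in hx. unfold R_dist in hx.
  rewrite h in hx.
  - replace (c - f a) with (- (f a - c)) in hx by ring. rewrite Rabs_Ropp in hx.
    enough (Rabs (f a - c) < Rabs (f a - c)) by lra. apply hx. split.
    + split; [exact I|]. destruct hd; subst d; intro; lra.
    + replace (a + d * (alp / 2) - a) with (d * (alp / 2)) by ring.
      destruct hd; subst d; [rewrite Rabs_pos_eq by lra | rewrite Rabs_left by lra]; lra.
  - destruct hd; subst d; nra.
Qed.

Lemma alt_sum_bound (l : list R) B : (forall y, In y l -> Rabs y <= B) ->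
  Rabs (alt_sum l) <= INR (length l) * B.
Proof.
  induction l as [|a l IH]; intros h; cbn [alt_sum length].
  - rewrite Rabs_R0; simpl INR; lra.
  - rewrite S_INR. assert (h1 := h a (or_introl eq_refl)).
    assert (h2 := IH (fun y hy => h y (or_intror hy))).
    eapply Rle_trans; [apply Rabs_triang|]. rewrite Rabs_Ropp. lra.
Qed.

Lemma altI_ext k : forall j xp prev acc (F G : list R -> R), 0 <= prev <= xp ->
  (forall xs, List.Forall (fun x => 0 <= x <= xp) xs -> length xs = k -> F (rev acc ++ xs) = G (rev acc ++ xs)) ->
  altI k j xp prev acc F = altI k j xp prev acc G.
Proof.
  induction k as [|k IH]; intros j xp prev acc F G hp h.
  - simpl. assert (e := h (@List.nil R) ltac:(constructor) ltac:(simpl; lia)). rewrite app_nil_r in e. exact e.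
  - simpl altI.
    assert (hg : forall x, 0 <= x <= xp ->
       altI k (S j) xp x (x :: acc) F = altI k (S j) xp x (x :: acc) G).
    { intros x hx. apply IH; auto. intros xs hxs hl. simpl rev. rewrite <- app_assoc. simpl.
      apply h. constructor; auto. simpl; lia. }
    destruct (Nat.eqb j 1); [|destruct (Nat.even j)]; apply DRInt_ext; intros x hx; apply hg;
      unfold Rmin, Rmax in hx; destruct Rle_dec; lra.
Qed.

Lemma inf_sum_scal u l c : infinite_sum u l -> infinite_sum (fun m => c * u m) (c * l).
Proof.
  intros h eps he.
  destruct (h (eps / (Rabs c + 1))) as [N hN].
  { apply Rdiv_lt_0_compat; [lra|]. pose proof (Rabs_pos c); lra. }
  exists N. intros n hn. specialize (hN n hn). unfold R_dist in *.
  rewrite (sum_eq _ (fun i => u i * c)) by (intros; ring).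
  rewrite <- scal_sum. replace (c * sum_f_R0 u n - c * l) with (c * (sum_f_R0 u n - l)) by ring.
  rewrite Rabs_mult. pose proof (Rabs_pos c).
  assert (Rabs c * Rabs (sum_f_R0 u n - l) <= Rabs c * (eps / (Rabs c + 1))).
  { apply Rmult_le_compat_l; lra. }
  assert (Rabs c * (eps / (Rabs c + 1)) < eps).
  { replace (Rabs c * (eps / (Rabs c + 1))) with (eps - eps / (Rabs c + 1)) by (field; lra).
    assert (0 < eps / (Rabs c + 1)) by (apply Rdiv_lt_0_compat; lra). lra. }
  lra.
Qed.

Lemma alg1 Zm Zp : 0 < Zm -> 0 < Zp ->
  sqrt (Zp / Zm) * / cosh (ln (sqrt (Zp / Zm))) = 2 * Zp / (Zm + Zp) /\
  tanh (ln (sqrt (Zp / Zm))) = (Zp - Zm) / (Zm + Zp).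
Proof.
  intros h1 h2. assert (hq : 0 < Zp / Zm) by (apply Rdiv_lt_0_compat; lra).
  set (s := sqrt (Zp / Zm)).
  assert (hs : 0 < s) by (apply sqrt_lt_R0; auto).
  assert (hss : s * s = Zp / Zm) by (apply sqrt_sqrt; lra).
  assert (eZ : Zp = s * s * Zm) by (rewrite hss; field; lra).
  assert (ec : cosh (ln s) = (s + / s) / 2) by (unfold cosh; rewrite exp_Ropp, exp_ln; auto).
  assert (et : sinh (ln s) = (s - / s) / 2) by (unfold sinh; rewrite exp_Ropp, exp_ln; auto).
  unfold tanh. rewrite ec, et. rewrite eZ. split; field; split; try lra; nra.
Qed.

Lemma ln_sqrt' x : 0 < x -> ln (sqrt x) = ln x / 2.
Proof.
  intros h. assert (hs : 0 < sqrt x) by (apply sqrt_lt_R0; auto).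
  rewrite <- (sqrt_sqrt x) at 2 by lra. rewrite ln_mult by auto. field.
Qed.

Theorem mainTheorem3
  (xp : R) (K rho dK drho dZ : R -> R) (Km rhom Kp rhop : R)
  (hxp : 0 < xp)
  (hKpos : forall x, 0 < K x) (hrhopos : forall x, 0 < rho x)
  (hKc : continuity K) (hrhoc : continuity rho)
  (hKm : forall x, x < 0 -> K x = Km) (hrhom : forall x, x < 0 -> rho x = rhom)
  (hKp : forall x, xp < x -> K x = Kp) (hrhop : forall x, xp < x -> rho x = rhop)
  (hKC1 : C1_on K dK 0 xp) (hrhoC1 : C1_on rho drho 0 xp)
  (hZC1 : C1_on (Zf K rho) dZ 0 xp)
  (hmono : monotone_on (Zf K rho) 0 xp)
  (hratio : exp (- PI) < sqrt (Kp * rhop) / sqrt (Km * rhom) < exp PI) :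
  let Zm := sqrt (Km * rhom) in
  let Zp := sqrt (Kp * rhop) in
  let cm := sqrt (Km / rhom) in
  let CG := sqrt (Zp / Zm) in
  let tau := tauf (cf K rho) in
  let r := fun x => dZ x / (2 * Zf K rho x) in
  (exists Tinf : nat -> R,
      (forall m, lim_infty (T_even p0_step CG cm xp tau r m) (Tinf m)) /\
      infinite_sum Tinf (2 * Zp / (Zm + Zp)) /\
      2 * Zp / (Zm + Zp) = CG * / cosh (ln CG)) /\
  (exists Rinf : nat -> R,
      (forall m, lim_infty (R_odd p0_step cm xp tau r m) (Rinf m)) /\
      infinite_sum Rinf ((Zp - Zm) / (Zm + Zp)) /\
      (Zp - Zm) / (Zm + Zp) = tanh (ln CG)).
Proof.
  intros Zm Zp cm CG tau r.
  destruct hZC1 as [_ [hdc hd]].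
  assert (hZpos : forall x, 0 < Zf K rho x).
  { intros x; unfold Zf; apply sqrt_lt_R0. apply Rmult_lt_0_compat; auto. }
  assert (hZc : continuity (Zf K rho)).
  { intros x; unfold Zf.
    change (continuity_pt (comp sqrt (fun y => K y * rho y)) x).
    apply continuity_pt_comp. apply continuity_pt_mult; auto.
    apply continuity_pt_sqrt. left; apply Rmult_lt_0_compat; auto. }
  assert (K0 : K 0 = Km) by (apply (cont_side K 0 Km (-1)); auto; intros; apply hKm; lra).
  assert (r0 : rho 0 = rhom) by (apply (cont_side rho 0 rhom (-1)); auto; intros; apply hrhom; lra).
  assert (Kx : K xp = Kp) by (apply (cont_side K xp Kp 1); auto; intros; apply hKp; lra).
  assert (rx : rho xp = rhop) by (apply (cont_side rho xp rhop 1); auto; intros; apply hrhop; lra).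
  assert (hKm0 : 0 < Km) by (rewrite <- K0; auto).
  assert (hrm0 : 0 < rhom) by (rewrite <- r0; auto).
  assert (hKp0 : 0 < Kp) by (rewrite <- Kx; auto).
  assert (hrp0 : 0 < rhop) by (rewrite <- rx; auto).
  assert (hZm : 0 < Zm) by (apply sqrt_lt_R0; nra).
  assert (hZp : 0 < Zp) by (apply sqrt_lt_R0; nra).
  assert (hcm : 0 < cm) by (apply sqrt_lt_R0; apply Rdiv_lt_0_compat; auto).
  assert (hZ0 : Zf K rho 0 = Zm) by (unfold Zf; rewrite K0, r0; reflexivity).
  assert (hZx : Zf K rho xp = Zp) by (unfold Zf; rewrite Kx, rx; reflexivity).
  set (v := fun x => ln (Zf K rho x) / 2 - ln (Zf K rho 0) / 2).
  assert (hL : v xp = ln CG).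
  { unfold v, CG. rewrite hZ0, hZx. rewrite ln_sqrt' by (apply Rdiv_lt_0_compat; auto).
    rewrite ln_div by auto. field. }
  assert (hLb : Rabs (v xp) < PI / 2).
  { rewrite hL. unfold CG. rewrite ln_sqrt' by (apply Rdiv_lt_0_compat; auto).
    change (sqrt (Kp * rhop) / sqrt (Km * rhom)) with (Zp / Zm) in hratio.
    destruct hratio as [ha hb].
    assert (h1 := ln_increasing _ _ (exp_pos _) ha). rewrite ln_exp in h1.
    assert (h2 := ln_increasing (Zp / Zm) (exp PI) (ltac:(apply Rdiv_lt_0_compat; auto)) hb). rewrite ln_exp in h2.
    apply Rabs_def1; lra. }
  destruct (series_all (v xp) hLb) as [hse hso].
  destruct (alg1 Zm Zp hZm hZp) as [a1 a2]. fold CG in a1, a2. rewrite <- hL in a1, a2.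
  assert (hci : Cf (fun s => / cf K rho s)).
  { intros x. apply continuity_pt_filterlim. unfold cf.
    assert (0 < sqrt (K x / rho x)) by (apply sqrt_lt_R0, Rdiv_lt_0_compat; auto).
    apply continuity_pt_inv; [|lra].
    change (continuity_pt (comp sqrt (fun y => K y / rho y)) x).
    apply continuity_pt_comp. apply continuity_pt_div; auto. specialize (hrhopos x); lra.
    apply continuity_pt_sqrt. left; apply Rdiv_lt_0_compat; auto. }
  assert (hcipos : forall s, 0 < / cf K rho s).
  { intros s. apply Rinv_0_lt_compat. unfold cf. apply sqrt_lt_R0, Rdiv_lt_0_compat; auto. }
  set (B := tau xp).
  assert (htau : forall x, 0 <= x <= xp -> 0 <= tau x <= B).
  { intros x hx. unfold B, tau, tauf. rewrite !DRInt_eq by (apply exR; auto).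
    rewrite <- (RInt_Chasles (V:=R_CompleteNormedModule) _ 0 x xp) by (apply exR; auto).
    assert (0 <= RInt (fun s => / cf K rho s) 0 x)
      by (apply RInt_ge_0; [lra|apply exR; auto|intros; left; auto]).
    assert (0 <= RInt (fun s => / cf K rho s) x xp)
      by (apply RInt_ge_0; [lra|apply exR; auto|intros; left; auto]).
    unfold plus; simpl. lra. }
  assert (hhat : forall xs, List.Forall (fun x => 0 <= x <= xp) xs ->
            Rabs (hat_t tau xs) <= 2 * (INR (length xs) * B)).
  { intros xs hxs. unfold hat_t. rewrite Rabs_mult, Rabs_pos_eq by lra.
    apply Rmult_le_compat_l; [lra|]. rewrite <- (length_map tau).
    apply alt_sum_bound. intros y hy. apply in_map_iff in hy. destruct hy as [x [ex hx]].
    subst y. rewrite List.Forall_forall in hxs. specialize (htau x (hxs x hx)).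
    rewrite Rabs_pos_eq; lra. }
  assert (hB : 0 <= B) by (apply htau; lra).
  assert (hAP := altI_P (Zf K rho) dZ xp hxp hZpos hZc hdc hd).
  split.
  - exists (fun m => (-1) ^ m * CG * P (v xp) (2 * m) false 0). split; [|split].
    + intros m eps he. exists (2 * (INR (2 * m) * B) + B). intros t ht.
      unfold T_even, alt_integral.
      rewrite (altI_ext (2 * m) 1 xp 0 (@List.nil R) _ (prod_r r)).
      * rewrite hAP by (lia || lra). simpl prod_r. simpl Nat.even.
        replace (v 0) with 0 by (unfold v; ring).
        change (ln (Zf K rho xp) / 2 - ln (Zf K rho 0) / 2) with (v xp). replace (ln (Zf K rho 0) / 2 - ln (Zf K rho 0) / 2) with 0 by ring. match goal with |- Rabs ?e < _ => replace e with 0 by ring end. rewrite Rabs_R0. lra.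
      * lra.
      * intros xs hxs hl. simpl. unfold p0_step. destruct Rle_dec as [_|hn]; [ring|].
        exfalso. apply hn. assert (h1 := hhat xs hxs). rewrite hl in h1.
        assert (h2 : tau xp <= B) by (unfold B; lra).
        assert (h3 : 0 <= t - hat_t tau xs - tau xp) by (apply Rabs_le_between in h1 || idtac; split_Rabs; lra).
        nra.
    + replace (2 * Zp / (Zm + Zp)) with (CG * / cosh (v xp)) by (rewrite a1; reflexivity).
      rewrite (functional_extensionality (fun m => (-1) ^ m * CG * P (v xp) (2 * m) false 0)
                 (fun m => CG * ((-1) ^ m * P (v xp) (2 * m) false 0))) by (intros; ring).
      apply inf_sum_scal; auto.
    + rewrite <- a1, hL. reflexivity.
  - exists (fun m => (-1) ^ m * P (v xp) (2 * m + 1) false 0). split; [|split].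
    + intros m eps he. exists (2 * (INR (2 * m + 1) * B) + B). intros t ht.
      unfold R_odd, alt_integral.
      rewrite (altI_ext (2 * m + 1) 1 xp 0 (@List.nil R) _ (prod_r r)).
      * rewrite hAP by (lia || lra). simpl prod_r. simpl Nat.even.
        replace (v 0) with 0 by (unfold v; ring).
        change (ln (Zf K rho xp) / 2 - ln (Zf K rho 0) / 2) with (v xp). replace (ln (Zf K rho 0) / 2 - ln (Zf K rho 0) / 2) with 0 by ring. match goal with |- Rabs ?e < _ => replace e with 0 by ring end. rewrite Rabs_R0. lra.
      * lra.
      * intros xs hxs hl. simpl. unfold p0_step. destruct Rle_dec as [_|hn]; [ring|].
        exfalso. apply hn. assert (h1 := hhat xs hxs). rewrite hl in h1.
        assert (h2 : 0 <= tau 0) by (apply htau; lra).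
        assert (h3 : 0 <= t - hat_t tau xs + tau 0) by (split_Rabs; lra).
        nra.
    + rewrite <- a2. auto.
    + rewrite <- a2, hL. reflexivity.
Qed.
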